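(* Let $\mathbb{F}\in\{\mathbb{R},\mathbb{C}\}$. If $S\in\mathsf{GL}_m(\mathbb{F})$ and $T\in\mathsf{GL}_n(\mathbb{F})$ are Perron similarities, then $S\otimes T$ is a Perron similarity.
   Context: An invertible matrix $S\in\mathsf{GL}_n(\mathbb{F})$ is called a Perron similarity if there is an index $i\in\{1,\ldots,n\}$ such that the column $Se_i$ and the row $e_i^\top S^{-1}$ are both entrywise nonnegative (real) or both entrywise nonpositive (real); here $e_i$ is the $i$-th standard basis vector. $\otimes$ denotes the Kronecker product, $A\otimes B=[a_{ij}B]$ blockwise. *)

(* Defs.v *)
From HB Require Import structures.
From mathcomp Require Import all_boot all_order all_algebra.
From mathcomp Require Export mxtens complex.
Set Implicit Arguments. Unset Strict Implicit. Unset Printing Implicit Defensive.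
Import Order.TTheory GRing.Theory Num.Theory.
Local Open Scope ring_scope.

(* In a numFieldType such as complex R,
   [0 <= x] means x is real and nonnegative. *)
Definition perron_similarity (F : numFieldType) (n : nat) (S : 'M[F]_n) : Prop :=
  S \in unitmx /\
  exists i : 'I_n,
    (forall k : 'I_n, 0 <= S k i /\ 0 <= invmx S i k) \/
    (forall k : 'I_n, S k i <= 0 /\ invmx S i k <= 0).

(* Main.v *)
Require Import Defs.
From HB Require Import structures.
From mathcomp Require Import all_boot all_order all_algebra.
From mathcomp Require Import mxtens complex reals.
Import Order.TTheory GRing.Theory Num.Theory.
Local Open Scope ring_scope.

Lemma tens_inv (F : fieldType) m n (S : 'M[F]_m.+1) (T : 'M[F]_n.+1) :
  S \in unitmx -> T \in unitmx ->
  invmx (S *t T) = invmx S *t invmx T.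
Proof.
move=> uS uT.
have uST := tensmx_unit (isT : m.+1 != 0%N) (isT : n.+1 != 0%N) uS uT.
have H : (invmx S *t invmx T) *m (S *t T) = 1%:M.
  rewrite tensmx_mul !mulVmx //; apply/matrixP=> /= i j.
  case: (mxtens_indexP i) => a b; case: (mxtens_indexP j) => c d.
  rewrite tensmxE !mxE -natrM mulnb.
  by rewrite (inj_eq (can_inj (@mxtens_indexK _ _))) xpair_eqE.
by rewrite -[RHS]mulmx1 -(mulmxV uST) mulmxA H mul1mx.
Qed.

Lemma key (F : numFieldType) m n (S : 'M[F]_m) (T : 'M[F]_n) :
  perron_similarity S -> perron_similarity T -> perron_similarity (S *t T).
Proof.
case: m S => [|m] S; first by move=> [_ [[]]].
case: n T => [|n] T; first by move=> _ [_ [[]]].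
move=> [uS [i HS]] [uT [j HT]].
split; first exact: tensmx_unit.
exists (mxtens_index (i, j)).
rewrite tens_inv //.
have E k : exists a b, k = @mxtens_index m.+1 n.+1 (a, b).
  by case: (mxtens_indexP k) => a b; exists a, b.
case: HS => HS; case: HT => HT; [left|right|right|left] => k;
  have [a [b ->]] := E k; rewrite !tensmxE;
  have [h1 h2] := HS a; have [h3 h4] := HT b.
- by rewrite !mulr_ge0.
- by rewrite !mulr_ge0_le0.
- by rewrite !mulr_le0_ge0.
- by rewrite !mulr_le0.
Qed.

Theorem theorem4p2 :
  (forall (R : realType) (m n : nat) (S : 'M[R]_m) (T : 'M[R]_n),
      perron_similarity S -> perron_similarity T ->
      perron_similarity (S *t T)) /\
  (forall (R : realType) (m n : nat) (S : 'M[R[i]]_m) (T : 'M[R[i]]_n),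
      perron_similarity S -> perron_similarity T ->
      perron_similarity (S *t T)).
Proof.
by split=> R m n S T; apply: key.
Qed.
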